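(* Let $f:H\to\mathbb{R}\cup\{+\infty\}$ be proper lower semicontinuous with the K\L{} property at $x^*$ with desingularizing function $\varphi:[0,\eta[\to[0,\infty[$, the K\L{} inequality holding on $\Gamma_\eta(x^*,\delta)$. Let $(x^k)$ satisfy $\mathbf{H}_1$ and $\mathbf{H}_2$, and fix $k\ge1$. If $x^k$ and $x^{k+1}$ belong to $\underline{\Gamma}_\eta(x^*,\delta)$, then $$2\|x^{k+1}-x^k\|\le\|x^k-x^{k-1}\|+\frac{1}{a_kb_k}\big[\varphi(f(x^k)-f(x^* ))-\varphi(f(x^{k+1})-f(x^* ))\big]+\varepsilon_k.$$
   Context: Lazy slope $\|\partial f(x)\|_-=\inf_{p\in\partial f(x)}\|p\|$ ($+\infty$ if empty), $\partial f$ the limiting Fréchet subdifferential. Desingularizing function: continuous concave $\varphi:[0,\eta[\to[0,\infty[$, $\varphi(0)=0$, $C^1$ on $]0,\eta[$ with $\varphi'>0$. K\L{} inequality on $\Gamma_\eta(x^*,\delta)=\{x:\|x-x^*\|<\delta,\ f(x^* )<f(x)<f(x^* )+\eta\}$: $\varphi'(f(x)-f(x^* ))\|\partial f(x)\|_-\ge1$. $\underline{\Gamma}_\eta(x^*,\delta)=\{x:\|x-x^*\|<\delta,\ f(x^* )\le f(x)<f(x^* )+\eta\}$. $\mathbf{H}_1$: for each $k$, $f(x^{k+1})+a_k\|x^{k+1}-x^k\|^2\le f(x^k)$, $a_k>0$. $\mathbf{H}_2$: for each $k$, $b_{k+1}\|\partial f(x^{k+1})\|_-\le\|x^{k+1}-x^k\|+\varepsilon_{k+1}$,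 $b_{k+1}>0$, $\varepsilon_{k+1}\ge0$. *)

(* Defs.v *)
From Stdlib Require Import Reals Lra ClassicalEpsilon.
Open Scope R_scope.

Inductive ERbar := Fin (r : R) | PInf.

Definition Elt (r : R) (e : ERbar) : Prop :=
  match e with Fin s => r < s | PInf => True end.

Definition Ele (e1 e2 : ERbar) : Prop :=
  match e1, e2 with
  | _, PInf => True
  | PInf, Fin _ => False
  | Fin r, Fin s => r <= s
  end.

Definition Eplus (e1 e2 : ERbar) : ERbar :=
  match e1, e2 with Fin r, Fin s => Fin (r + s) | _, _ => PInf end.

(** product c * e for a scalar c > 0 (so c * (+∞) = +∞) *)
Definition Emul_pos (c : R) (e : ERbar) : ERbar :=
  match e with Fin s => Fin (c * s) | PInf => PInf end.

Record Hilbert := {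
  Hc :> Type;
  hzero : Hc;
  hplus : Hc -> Hc -> Hc;
  hopp : Hc -> Hc;
  hscal : R -> Hc -> Hc;
  hinner : Hc -> Hc -> R;
  hplus_assoc : forall x y z, hplus x (hplus y z) = hplus (hplus x y) z;
  hplus_comm : forall x y, hplus x y = hplus y x;
  hplus_zero : forall x, hplus hzero x = x;
  hplus_opp : forall x, hplus (hopp x) x = hzero;
  hscal_assoc : forall a b x, hscal a (hscal b x) = hscal (a * b) x;
  hscal_one : forall x, hscal 1 x = x;
  hscal_distr_l : forall a x y, hscal a (hplus x y) = hplus (hscal a x) (hscal a y);
  hscal_distr_r : forall a b x, hscal (a + b) x = hplus (hscal a x) (hscal b x);
  hinner_sym : forall x y, hinner x y = hinner y x;
  hinner_plus : forall x y z, hinner (hplus x y) z = hinner x z + hinner y z;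
  hinner_scal : forall a x y, hinner (hscal a x) y = a * hinner x y;
  hinner_pos : forall x, 0 <= hinner x x;
  hinner_def : forall x, hinner x x = 0 -> x = hzero;
  hcomplete : forall u : nat -> Hc,
    (forall e, 0 < e -> exists N, forall n m, (N <= n)%nat -> (N <= m)%nat ->
        sqrt (hinner (hplus (u n) (hopp (u m))) (hplus (u n) (hopp (u m)))) < e) ->
    exists l, forall e, 0 < e -> exists N, forall n, (N <= n)%nat ->
        sqrt (hinner (hplus (u n) (hopp l)) (hplus (u n) (hopp l))) < e
}.

Arguments hplus {h}. Arguments hopp {h}. Arguments hinner {h}.

Definition hminus {H : Hilbert} (x y : H) : H := hplus x (hopp y).
Definition hnorm {H : Hilbert} (x : H) : R := sqrt (hinner x x).

Definition seq_cv {H : Hilbert} (u : nat -> H) (l : H) : Prop :=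
  forall e, 0 < e -> exists N, forall n, (N <= n)%nat -> hnorm (hminus (u n) l) < e.

Definition proper_fun {H : Hilbert} (f : H -> ERbar) : Prop :=
  exists x, f x <> PInf.

Definition lsc {H : Hilbert} (f : H -> ERbar) : Prop :=
  forall x r, Elt r (f x) ->
    exists d, 0 < d /\ forall y, hnorm (hminus y x) < d -> Elt r (f y).

Definition frechet_subdiff {H : Hilbert} (f : H -> ERbar) (x p : H) : Prop :=
  exists fx, f x = Fin fx /\
    forall e, 0 < e -> exists d, 0 < d /\
      forall y, hnorm (hminus y x) < d ->
        Ele (Fin (fx + hinner p (hminus y x) - e * hnorm (hminus y x))) (f y).

Definition limiting_subdiff {H : Hilbert} (f : H -> ERbar) (x p : H) : Prop :=
  exists fx, f x = Fin fx /\
  exists (xs ps : nat -> H),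
    seq_cv xs x /\ seq_cv ps p /\
    (forall n, frechet_subdiff f (xs n) (ps n)) /\
    (forall e, 0 < e -> exists N, forall n, (N <= n)%nat ->
        exists v, f (xs n) = Fin v /\ Rabs (v - fx) < e).

(** lazy slope ||∂f(x)||_- = inf_{p ∈ ∂f(x)} ||p||, +∞ if ∂f(x) = ∅ *)
Definition lazy_slope {H : Hilbert} (f : H -> ERbar) (x : H) : ERbar.
Proof.
  destruct (excluded_middle_informative (exists p, limiting_subdiff f x p)) as [Hne|_].
  - set (E := fun r => exists p, limiting_subdiff f x p /\ r = - hnorm p).
    assert (Hb : bound E).
    { exists 0. intros r [p [_ ->]]. unfold hnorm.
      pose proof (sqrt_pos (hinner p p)). lra. }
    assert (Hex : exists r, E r).
    { destruct Hne as [p Hp]. exists (- hnorm p). exists p. split; auto. }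
    destruct (completeness E Hb Hex) as [m _].
    exact (Fin (- m)).
  - exact PInf.
Defined.

Definition in_co (eta : ERbar) (s : R) : Prop := 0 <= s /\ Elt s eta.
Definition in_oo (eta : ERbar) (s : R) : Prop := 0 < s /\ Elt s eta.

Definition desingularizing (eta : ERbar) (phi dphi : R -> R) : Prop :=
  phi 0 = 0 /\
  (forall s, in_co eta s -> 0 <= phi s) /\
  (forall s, in_co eta s -> forall e, 0 < e -> exists d, 0 < d /\
      forall t, in_co eta t -> Rabs (t - s) < d -> Rabs (phi t - phi s) < e) /\
  (forall s t l, in_co eta s -> in_co eta t -> 0 <= l <= 1 ->
      l * phi s + (1 - l) * phi t <= phi (l * s + (1 - l) * t)) /\
  (forall s, in_oo eta s -> derivable_pt_lim phi s (dphi s)) /\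
  (forall s, in_oo eta s -> continuity_pt dphi s) /\
  (forall s, in_oo eta s -> 0 < dphi s).

(** x ∈ Γ_η(xstar,δ), where fs = f(xstar) *)
Definition in_Gamma {H : Hilbert} (f : H -> ERbar) (xstar : H) (fs : R)
  (eta : ERbar) (delta : R) (x : H) : Prop :=
  hnorm (hminus x xstar) < delta /\
  exists v, f x = Fin v /\ fs < v /\ Elt (v - fs) eta.

Definition in_Gamma_le {H : Hilbert} (f : H -> ERbar) (xstar : H) (fs : R)
  (eta : ERbar) (delta : R) (x : H) : Prop :=
  hnorm (hminus x xstar) < delta /\
  exists v, f x = Fin v /\ fs <= v /\ Elt (v - fs) eta.

Definition KL_on {H : Hilbert} (f : H -> ERbar) (xstar : H) (fs : R)
  (eta : ERbar) (delta : R) (dphi : R -> R) : Prop :=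
  forall x v, in_Gamma f xstar fs eta delta x -> f x = Fin v ->
    Ele (Fin 1) (Emul_pos (dphi (v - fs)) (lazy_slope f x)).

(* Main.v *)
Require Import Defs.
From Stdlib Require Import Reals Lra Lia Psatz.
Open Scope R_scope.

Lemma tangent_concave (eta : ERbar) (phi : R -> R) (s t l : R) :
  (forall s t l, in_co eta s -> in_co eta t -> 0 <= l <= 1 ->
      l * phi s + (1 - l) * phi t <= phi (l * s + (1 - l) * t)) ->
  in_co eta s -> in_co eta t -> derivable_pt_lim phi s l ->
  phi t <= phi s + l * (t - s).
Proof.
  intros Hc Hs Ht Hd.
  destruct (Req_dec t s) as [->|Hts]; [lra|].
  destruct (Rle_dec (phi t) (phi s + l * (t - s))) as [ok|nok]; [exact ok|].
  exfalso.
  set (gap := phi t - phi s - l * (t - s)).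
  assert (Hg : 0 < gap) by (unfold gap; lra).
  assert (Hat : 0 < Rabs (t - s)) by (apply Rabs_pos_lt; lra).
  destruct (Hd (gap / Rabs (t - s))) as [[del Hdel] Hq].
  { apply Rdiv_lt_0_compat; lra. }
  set (lam := Rmin 1 (del / (2 * Rabs (t - s)))).
  assert (Hl0 : 0 < lam).
  { unfold lam; apply Rmin_pos; [lra|]. apply Rdiv_lt_0_compat; lra. }
  assert (Hl1 : lam <= 1) by (unfold lam; apply Rmin_l).
  assert (Hl2 : lam <= del / (2 * Rabs (t - s))) by (unfold lam; apply Rmin_r).
  set (h := lam * (t - s)).
  assert (Hh0 : h <> 0).
  { unfold h. intro E. apply Rmult_integral in E. lra. }
  assert (Hhd : Rabs h < del).
  { unfold h. rewrite Rabs_mult, (Rabs_right lam) by lra.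
    apply Rmult_le_compat_r with (r := Rabs (t - s)) in Hl2; [|lra].
    replace (del / (2 * Rabs (t - s)) * Rabs (t - s)) with (del / 2) in Hl2
      by (field; lra). lra. }
  specialize (Hq h Hh0 Hhd).
  pose proof (Hc t s lam Ht Hs (conj (Rlt_le _ _ Hl0) Hl1)) as Hcc.
  replace (lam * t + (1 - lam) * s) with (s + h) in Hcc by (unfold h; ring).
  set (q := (phi (s + h) - phi s) / h) in Hq.
  assert (Hqe : phi (s + h) - phi s = h * q) by (unfold q; field; auto).
  assert (H1 : (t - s) * q >= phi t - phi s).
  { assert (lam * ((t - s) * q) >= lam * (phi t - phi s)).
    { assert (Hh : h = lam * (t - s)) by reflexivity. rewrite Hh in Hqe. rewrite Hh in Hcc.
      replace (lam * ((t - s) * q)) with (lam * (t - s) * q) by ring. lra. }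
    nra. }
  assert (H2 : (t - s) * (q - l) >= gap) by (unfold gap; nra).
  assert (H3 : Rabs ((t - s) * (q - l)) < gap).
  { rewrite Rabs_mult.
    replace gap with (Rabs (t - s) * (gap / Rabs (t - s))) by (field; lra).
    apply Rmult_lt_compat_l; auto. }
  pose proof (Rle_abs ((t - s) * (q - l))). lra.
Qed.

Theorem mainTheorem7 (H : Hilbert) (f : H -> ERbar) (xstar : H) (fs : R)
  (eta : ERbar) (delta : R) (phi dphi : R -> R)
  (x : nat -> H) (a b eps : nat -> R) (k : nat) :
  proper_fun f -> lsc f ->
  f xstar = Fin fs ->
  Elt 0 eta -> 0 < delta ->
  desingularizing eta phi dphi ->
  KL_on f xstar fs eta delta dphi ->
  (* H1 *)
  (forall n, 0 < a n /\
     Ele (Eplus (f (x (S n))) (Fin (a n * (hnorm (hminus (x (S n)) (x n)))^2)))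
         (f (x n))) ->
  (* H2 *)
  (forall n, 0 < b (S n) /\ 0 <= eps (S n) /\
     Ele (Emul_pos (b (S n)) (lazy_slope f (x (S n))))
         (Fin (hnorm (hminus (x (S n)) (x n)) + eps (S n)))) ->
  (1 <= k)%nat ->
  in_Gamma_le f xstar fs eta delta (x k) ->
  in_Gamma_le f xstar fs eta delta (x (S k)) ->
  forall vk vk1, f (x k) = Fin vk -> f (x (S k)) = Fin vk1 ->
  2 * hnorm (hminus (x (S k)) (x k)) <=
    hnorm (hminus (x k) (x (pred k))) +
    / (a k * b k) * (phi (vk - fs) - phi (vk1 - fs)) + eps k.
Proof.
  intros _ _ Hfs Heta Hdel Hdes HKL H1 H2 Hk Gk Gk1 vk vk1 Evk Evk1.
  destruct k as [|k]; [lia|]. simpl pred.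
  destruct Hdes as [Hphi0 [_ [_ [Hconc [Hder [_ Hdpos]]]]]].
  destruct (H1 (S k)) as [Ha HH1]. rewrite Evk, Evk1 in HH1. simpl in HH1.
  destruct (H2 k) as [Hb [He HH2]].
  set (r := hnorm (hminus (x (S (S k))) (x (S k)))) in *.
  set (r0 := hnorm (hminus (x (S k)) (x k))) in *.
  assert (Hr : 0 <= r) by (unfold r, hnorm; apply sqrt_pos).
  assert (Hr0 : 0 <= r0) by (unfold r0, hnorm; apply sqrt_pos).
  destruct Gk as [Gn [v [Ev [Hv Hve]]]]. rewrite Evk in Ev. injection Ev as <-.
  destruct Gk1 as [Gn1 [v1 [Ev1 [Hv1 Hve1]]]]. rewrite Evk1 in Ev1. injection Ev1 as <-.
  destruct (Req_dec vk fs) as [Eq|Neq].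
  - subst vk.
    assert (Q1 : a (S k) * r ^ 2 <= 0) by lra.
    assert (Q2 : r ^ 2 <= 0).
    { destruct (Rle_dec (r^2) 0) as [?|Hn]; auto. exfalso. nra. }
    assert (r = 0) by nra.
    assert (vk1 = fs) by nra. subst vk1.
    replace (phi (fs - fs) - phi (fs - fs)) with 0 by ring.
    rewrite H0. lra.
  - assert (Hin : in_Gamma f xstar fs eta delta (x (S k))).
    { split; auto. exists vk. repeat split; auto. lra. }
    pose proof (HKL _ _ Hin Evk) as HK.
    assert (Hoo : in_oo eta (vk - fs)) by (split; [lra|auto]).
    pose proof (Hdpos _ Hoo) as Hdp.
    destruct (lazy_slope f (x (S k))) as [s|]; simpl in HK, HH2; [|contradiction].
    assert (Htan := tangent_concave eta phi (vk - fs) (vk1 - fs) (dphi (vk - fs))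
                     Hconc (conj (Rlt_le _ _ (proj1 Hoo)) (proj2 Hoo))
                     (conj (ltac:(lra) : 0 <= vk1 - fs) Hve1) (Hder _ Hoo)).
    set (D := phi (vk - fs) - phi (vk1 - fs)) in *.
    set (dp := dphi (vk - fs)) in *.
    assert (HD : dp * (a (S k) * r ^ 2) <= D) by (unfold D; nra).
    assert (Hs : 0 < s) by nra.
    assert (Hr2 : 0 <= a (S k) * r ^ 2) by (apply Rmult_le_pos; [lra| apply pow2_ge_0]).
    assert (HD0 : 0 <= D) by (pose proof (Rmult_le_pos _ _ (Rlt_le _ _ Hdp) Hr2); lra).
    assert (A1 : a (S k) * r ^ 2 <= D * s).
    { assert (a (S k) * r ^ 2 * 1 <= a (S k) * r ^ 2 * (dp * s)) by (apply Rmult_le_compat_l; lra).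
      assert (dp * (a (S k) * r ^ 2) * s <= D * s) by (apply Rmult_le_compat_r; lra).
      nra. }
    assert (A2 : b (S k) * (a (S k) * r ^ 2) <= D * (r0 + eps (S k))).
    { assert (b (S k) * (a (S k) * r ^ 2) <= b (S k) * (D * s)) by (apply Rmult_le_compat_l; lra).
      assert (D * (b (S k) * s) <= D * (r0 + eps (S k))) by (apply Rmult_le_compat_l; lra).
      nra. }
    set (Y := / (a (S k) * b (S k)) * D).
    assert (HY : a (S k) * b (S k) * Y = D) by (unfold Y; field; lra).
    assert (HY0 : 0 <= Y).
    { unfold Y. apply Rmult_le_pos; auto. left. apply Rinv_0_lt_compat. nra. }
    assert (Hab : 0 < a (S k) * b (S k)) by nra.
    assert (A3 : r ^ 2 <= Y * (r0 + eps (S k))).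
    { rewrite <- HY in A2.
      apply Rmult_le_reg_l with (a (S k) * b (S k)); auto. nra. }
    set (A := r0 + eps (S k)) in *.
    assert (HA : 0 <= A) by (unfold A; lra).
    pose proof (pow2_ge_0 (Y - A)).
    assert (B1 : (2 * r) ^ 2 <= (Y + A) ^ 2) by nra.
    assert (2 * r <= Y + A).
    { apply pow_incr_inv with (n := 1%nat) || idtac.
      destruct (Rle_dec (2 * r) (Y + A)) as [?|Hn]; auto.
      exfalso. assert (Y + A < 2 * r) by lra. nra. }
    unfold A in *. lra.
Qed.
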